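(* Let $T\ge1$ be an integer and $a\in(0,1]$. Define $\alpha_0=\alpha_{-1}=1$ and $\alpha_t=\frac{T-t+2}{T-t+1+a}\alpha_{t-1}$ for $t=1,\dots,T$. Then \begin{enumerate} \item $\alpha_T\ge\frac{(T+1)^{1-a}}{2^{1-a}}$; \item $\frac{\sum_{t=1}^T\alpha_t}{\alpha_T}\le4\left(1+\frac{T^a-1}{a}\right)$; \item $4\left(1+\frac{T^a-1}{a}\right)\le 8T^a\ln(T+1)$. \end{enumerate} *)

(* Defs.v *)
From Stdlib Require Import Reals Lra Lia.
Open Scope R_scope.

(* alpha T a t : alpha_0 = 1, alpha_t = (T-t+2)/(T-t+1+a) * alpha_{t-1} for t >= 1.
   (alpha_{-1} = 1 is not used by the statement.) *)
Fixpoint alpha (T : nat) (a : R) (t : nat) : R :=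
  match t with
  | O => 1
  | S t' => (INR T - INR t + 2) / (INR T - INR t + 1 + a) * alpha T a t'
  end.

(* Main.v *)
Require Import Defs.
From Stdlib Require Import Reals.
From Stdlib Require Import Lra Lia Psatz.
Open Scope R_scope.

Lemma my_ln_le x y : 0 < x -> x <= y -> ln x <= ln y.
Proof. intros hx [h|h]. left; apply ln_increasing; auto. subst; lra. Qed.

Lemma my_exp_le x y : x <= y -> exp x <= exp y.
Proof. intros [h|h]. left; apply exp_increasing; auto. subst; lra. Qed.

Lemma tangent u c : exp c * (1 + u - c) <= exp u.
Proof.
  replace (exp u) with (exp c * exp (u - c)) by (rewrite <- exp_plus; f_equal; ring).
  apply Rmult_le_compat_l. left; apply exp_pos.
  pose proof (exp_ineq1_le (u - c)); lra.
Qed.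

Lemma bern r L : 0 <= r <= 1 -> exp (r * L) <= 1 + r * (exp L - 1).
Proof.
  intros hr.
  pose proof (tangent L (r * L)) as h1.
  pose proof (tangent 0 (r * L)) as h2. rewrite exp_0 in h2.
  set (E := exp (r * L)) in *.
  assert (r * (E * (1 + L - r * L)) <= r * exp L) by (apply Rmult_le_compat_l; lra).
  assert ((1 - r) * (E * (1 + 0 - r * L)) <= (1 - r) * 1) by (apply Rmult_le_compat_l; lra).
  nra.
Qed.

Lemma factor a k : 0 < a <= 1 -> 0 <= k ->
  exp ((1 - a) * (ln (k + 2) - ln (k + 1))) <= (k + 1) / (k + a).
Proof.
  intros ha hk.
  eapply Rle_trans. apply bern; lra.
  assert (exp (ln (k + 2) - ln (k + 1)) = (k + 2) / (k + 1)) as ->.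
  { unfold Rminus. rewrite exp_plus, exp_Ropp, !exp_ln by lra. reflexivity. }
  assert ((k + 1) / (k + a) - (1 + (1 - a) * ((k + 2) / (k + 1) - 1))
          = (1 - a) * (1 - a) / ((k + a) * (k + 1))) by (field; lra).
  assert (0 <= (1 - a) * (1 - a) / ((k + a) * (k + 1))).
  { unfold Rdiv. apply Rmult_le_pos. nra. left; apply Rinv_0_lt_compat; nra. }
  lra.
Qed.

Lemma alpha_pos T a n : 0 < a -> (n <= T)%nat -> 0 < alpha T a n.
Proof.
  intros ha. induction n; intros hn; cbn [alpha]. lra.
  assert (INR (S n) <= INR T) by (apply le_INR; lia).
  apply Rmult_lt_0_compat; [|apply IHn; lia].
  unfold Rdiv; apply Rmult_lt_0_compat. lra. apply Rinv_0_lt_compat; lra.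
Qed.

Lemma chain T a t d : 0 < a <= 1 -> (t + d <= T)%nat ->
  alpha T a t * exp ((1 - a) * (ln (INR T - INR t + 2) - ln (INR T - INR (t + d) + 2)))
  <= alpha T a (t + d).
Proof.
  intros ha. induction d; intros hd.
  - rewrite Nat.add_0_r, Rminus_diag, Rmult_0_r, exp_0; lra.
  - rewrite Nat.add_succ_r. cbn [alpha].
    set (n := (t + d)%nat) in *.
    assert (hT : INR (S n) <= INR T) by (apply le_INR; lia).
    assert (htn : INR t <= INR n) by (apply le_INR; lia).
    rewrite S_INR in *.
    set (k := INR T - INR n).
    assert (INR T - (INR n + 1) + 2 = k + 1) as -> by (unfold k; ring).
    assert (INR T - (INR n + 1) + 1 + a = k + a) as -> by (unfold k; ring).
    assert (INR T - INR t + 2 > 0) by lra.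
    assert (e : (1 - a) * (ln (INR T - INR t + 2) - ln (k + 1)) =
      (1 - a) * (ln (INR T - INR t + 2) - ln (INR T - INR n + 2))
      + (1 - a) * (ln (k + 2) - ln (k + 1))).
    { replace (INR T - INR n + 2) with (k + 2) by (unfold k; ring). ring. }
    rewrite e, exp_plus.
    pose proof (factor a k ha ltac:(unfold k; lra)) as hf.
    pose proof (IHd ltac:(lia)) as ih.
    pose proof (alpha_pos T a t (proj1 ha) ltac:(lia)).
    set (E1 := exp ((1 - a) * (ln (INR T - INR t + 2) - ln (INR T - INR n + 2)))) in *.
    set (E2 := exp ((1 - a) * (ln (k + 2) - ln (k + 1)))) in *.
    assert (0 < E1) by apply exp_pos.
    assert (0 < E2) by apply exp_pos.
    set (f := (k + 1) / (k + a)) in *.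
    set (A := alpha T a n) in *.
    set (B := alpha T a t) in *.
    assert (B * E1 * E2 <= B * E1 * f) by (apply Rmult_le_compat_l; nra).
    assert (B * E1 * f <= A * f) by (apply Rmult_le_compat_r; [unfold f, k; left; apply Rdiv_lt_0_compat; lra| lra]).
    lra.
Qed.

Definition G (a : R) (j : nat) : R :=
  match j with O => 0 | S _ => 1 + (exp (a * ln (INR j)) - 1) / a end.

Lemma Gstep a j : 0 < a <= 1 -> (1 <= j)%nat ->
  exp ((a - 1) * ln (INR j)) <= G a j - G a (j - 1).
Proof.
  intros ha hj. destruct j as [|[|m]]; [lia| |].
  - simpl. rewrite ln_1, !Rmult_0_r, exp_0. unfold Rdiv. lra.
  - replace (S (S m) - 1)%nat with (S m) by lia.
    unfold G.
    set (x := INR (S (S m))). set (y := INR (S m)).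
    assert (hy : 1 <= y) by (unfold y; rewrite S_INR; pose proof (pos_INR m); lra).
    assert (hx : x = y + 1) by (unfold x, y; rewrite (S_INR (S m)); ring).
    set (P := exp ((a - 1) * ln x)).
    set (X := exp (a * ln x)). set (Y := exp (a * ln y)).
    assert (hX : X = P * x).
    { unfold X, P. pose proof (exp_ln x ltac:(lra)) as ex. rewrite <- ex at 3. rewrite <- exp_plus. f_equal. ring. }
    assert (hb := bern a (ln y - ln x) ltac:(lra)).
    assert (exp (ln y - ln x) = y / x) as e.
    { unfold Rminus. rewrite exp_plus, exp_Ropp, !exp_ln by lra. reflexivity. }
    rewrite e in hb.
    assert (hY : Y = X * exp (a * (ln y - ln x))).
    { unfold Y, X. rewrite <- exp_plus. f_equal. ring. }
    assert (0 < P) by apply exp_pos.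
    assert (hb2 : X * exp (a * (ln y - ln x)) <= X * (1 + a * (y / x - 1))).
    { apply Rmult_le_compat_l. left; apply exp_pos. exact hb. }
    assert (X * (1 + a * (y / x - 1)) = P * x - a * P) as e2.
    { rewrite hX, hx. field. lra. }
    assert (a * P <= X - Y) by lra.
    assert (1 + (X - 1) / a - (1 + (Y - 1) / a) = (X - Y) / a) as -> by (field; lra).
    replace P with ((a * P) / a) by (field; lra).
    unfold Rdiv. apply Rmult_le_compat_r. left; apply Rinv_0_lt_compat; lra. lra.
Qed.

Lemma termwise T a i : 0 < a <= 1 -> (i <= T - 1)%nat -> (1 <= T)%nat ->
  alpha T a (S i) <= alpha T a T * (2 * (G a (T - i) - G a (T - S i))).
Proof.
  intros ha hi hT.
  pose proof (chain T a (S i) (T - S i) ha ltac:(lia)) as hc.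
  replace (S i + (T - S i))%nat with T in hc by lia.
  rewrite Rminus_diag in hc.
  replace (T - S i)%nat with (T - i - 1)%nat by lia.
  set (j := (T - i)%nat) in *.
  assert (hj : INR j = INR T - INR i) by (unfold j; rewrite minus_INR by lia; ring).
  assert (hj1 : 1 <= INR j) by (replace 1 with (INR 1) by reflexivity; apply le_INR; unfold j; lia).
  replace (INR T - INR (S i) + 2) with (INR j + 1) in hc by (rewrite hj, S_INR; ring).
  replace (0 + 2) with 2 in hc by ring.
  pose proof (Gstep a j ha ltac:(unfold j; lia)) as hg.
  set (E := exp ((1 - a) * (ln (INR j + 1) - ln 2))) in *.
  assert (0 < E) by apply exp_pos.
  assert (hinv : / E <= 2 * exp ((a - 1) * ln (INR j))).
  { unfold E. rewrite <- exp_Ropp.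
    rewrite <- (exp_ln 2) at 2 by lra. rewrite <- exp_plus.
    apply my_exp_le.
    assert (ln (INR j) <= ln (INR j + 1)) by (apply my_ln_le; lra).
    assert (0 < ln 2) by (pose proof ln_lt_2; lra).
    assert (0 <= ln (INR j)) by (rewrite <- ln_1; apply my_ln_le; lra).
    nra. }
  pose proof (alpha_pos T a T (proj1 ha) (le_n T)).
  pose proof (alpha_pos T a (S i) (proj1 ha) ltac:(lia)).
  assert (alpha T a (S i) <= alpha T a T * / E).
  { replace (alpha T a (S i)) with (alpha T a (S i) * E * / E) by (field; lra).
    apply Rmult_le_compat_r. left; apply Rinv_0_lt_compat; lra. lra. }
  assert (alpha T a T * / E <= alpha T a T * (2 * (G a j - G a (j - 1)))).
  { apply Rmult_le_compat_l; lra. }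
  lra.
Qed.

Lemma sum_bound T a n : 0 < a <= 1 -> (1 <= T)%nat -> (n <= T - 1)%nat ->
  sum_f_R0 (fun i => alpha T a (S i)) n <= alpha T a T * (2 * (G a T - G a (T - S n))).
Proof.
  intros ha hT. induction n; intros hn.
  - cbn [sum_f_R0]. pose proof (termwise T a 0 ha hn hT). rewrite Nat.sub_0_r in H. exact H.
  - cbn [sum_f_R0]. pose proof (termwise T a (S n) ha hn hT). pose proof (IHn ltac:(lia)). lra.
Qed.

Theorem lemmaA7 (T : nat) (a : R) :
  (1 <= T)%nat -> 0 < a <= 1 ->
  Rpower (INR T + 1) (1 - a) / Rpower 2 (1 - a) <= alpha T a T /\
  (sum_f_R0 (fun i => alpha T a (S i)) (T - 1)) / alpha T a T
    <= 4 * (1 + (Rpower (INR T) a - 1) / a) /\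
  4 * (1 + (Rpower (INR T) a - 1) / a) <= 8 * Rpower (INR T) a * ln (INR T + 1).
Proof.
  intros hT ha.
  assert (hT1 : 1 <= INR T) by (replace 1 with (INR 1) by reflexivity; apply le_INR; lia).
  assert (hGT : G a T = 1 + (Rpower (INR T) a - 1) / a).
  { destruct T; [lia|]. reflexivity. }
  unfold Rpower in *.
  assert (hX1 : 1 <= exp (a * ln (INR T))).
  { rewrite <- exp_0. apply my_exp_le.
    assert (0 <= ln (INR T)) by (rewrite <- ln_1; apply my_ln_le; lra). nra. }
  assert (hGpos : 1 <= G a T).
  { rewrite hGT. assert (0 <= (exp (a * ln (INR T)) - 1) / a).
    { unfold Rdiv. apply Rmult_le_pos. lra. left; apply Rinv_0_lt_compat; lra. } lra. }
  pose proof (alpha_pos T a T (proj1 ha) (le_n T)) as hA.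
  split; [|split].
  - pose proof (chain T a 0 T ha ltac:(lia)) as hc. simpl plus in hc.
    cbn [alpha] in hc. rewrite Rminus_diag in hc.
    replace (INR T - INR 0 + 2) with (INR T + 2) in hc by (simpl; ring).
    replace (0 + 2) with 2 in hc by ring.
    unfold Rdiv. rewrite <- exp_Ropp, <- exp_plus.
    eapply Rle_trans; [|exact hc]. rewrite Rmult_1_l. apply my_exp_le.
    assert (ln (INR T + 1) <= ln (INR T + 2)) by (apply my_ln_le; lra).
    nra.
  - pose proof (sum_bound T a (T - 1) ha hT (le_n _)) as hs.
    replace (T - S (T - 1))%nat with 0%nat in hs by lia.
    simpl G in hs at 2. rewrite <- hGT.
    unfold Rdiv. replace (4 * G a T) with (alpha T a T * (4 * G a T) * / alpha T a T)
      by (field; lra).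
    apply Rmult_le_compat_r. left; apply Rinv_0_lt_compat; lra. nra.
  - set (X := exp (a * ln (INR T))) in *.
    assert (hL : 0 <= ln (INR T)) by (rewrite <- ln_1; apply my_ln_le; lra).
    pose proof (tangent 0 (a * ln (INR T))) as ht. rewrite exp_0 in ht. fold X in ht.
    assert (h1 : (X - 1) / a <= X * ln (INR T)).
    { replace (X * ln (INR T)) with (a * (X * ln (INR T)) / a) by (field; lra).
      unfold Rdiv. apply Rmult_le_compat_r. left; apply Rinv_0_lt_compat; lra. nra. }
    assert (h2 : 2 * ln 2 + ln (INR T) <= 2 * ln (INR T + 1)).
    { replace (2 * ln 2 + ln (INR T)) with (ln (2 * 2 * INR T))
        by (rewrite !ln_mult by lra; ring).
      replace (2 * ln (INR T + 1)) with (ln ((INR T + 1) * (INR T + 1)))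
        by (rewrite ln_mult by lra; ring).
      apply my_ln_le; nra. }
    pose proof ln_lt_2.
    nra.
Qed.
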